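(* Let $r\ge1$ and let $\tau$ be a permutation of $F^r$ with $\tau(\mathbf 0)=\mathbf 0$. Then for any $a,b\in F^r$ the permutation $(\sigma_a|\sigma_b)$ of the points, defined by $(\{c\},\emptyset)\mapsto(\{c+a\},\emptyset)$ and $(\emptyset,\{c\})\mapsto(\emptyset,\{c+b\})$ for all $c\in F^r$, belongs to $\mathrm{Aut}(SQS_\tau)$. In particular, $\mathrm{Aut}(SQS_\tau)$ either acts transitively on the points of $SQS_\tau$ or has exactly two orbits on points, namely $\{(\{a\},\emptyset):a\in F^r\}$ and $\{(\emptyset,\{a\}):a\in F^r\}$.
   Context: $F=\mathrm{GF}(2)$, $\mathbf 0$ is the all-zero vector. The point set consists of the $2^{r+1}$ symbols $(\{a\},\emptyset)$ and $(\emptyset,\{a\})$, $a\in F^r$; a pair $(X,Y)$ with $X,Y\subseteq F^r$ denotes the set of points $\{(\{x\},\emptyset):x\in X\}\cup\{(\emptyset,\{y\}):y\in Y\}$. $SQS_\tau=Q_0\cup Q_1\cup Q_\tau$ where $Q_0=\{(\{a,b,c,d\},\emptyset): a,b,c,d\in F^r \text{ pairwise distinct}, a+b+c+d=\mathbf 0\}$, $Q_1=\{(\emptyset,\{a,b,c,d\}): a,b,c,d\in F^r \text{ pairwise distinct}, a+b+c+d=\mathbf 0\}$, $Q_\tau=\{(\{a,c\},\{b,d\}): a,b,c,d\in F^r, \tau(a+c)=b+d\neq\mathbf 0\}$. $\mathrm{Aut}(SQS_\tau)$ is the group of permutations of the point set mapping the set of quadruples onto itself. *)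

(* Defs.v *)
From HB Require Import structures.
From mathcomp Require Import all_boot all_algebra all_fingroup.
Set Implicit Arguments. Unset Strict Implicit. Unset Printing Implicit Defensive.
Import GRing.Theory.
Local Open Scope ring_scope.

Definition vec (r : nat) := 'rV['F_2]_r.

(* Points: inl a stands for ({a},∅), inr a stands for (∅,{a}). *)
Definition pt (r : nat) := (vec r + vec r)%type.

Section SQS.
Variable r : nat.
Variable tau : {perm vec r}.

Definition Q0 : {set {set pt r}} :=
  [set Q : {set pt r} | [exists a : vec r, exists b : vec r, exists c : vec r,
     exists d : vec r, [&& Q == [set (inl a : pt r); inl b; inl c; inl d],
       uniq [:: a; b; c; d] & a + b + c + d == 0]]].

Definition Q1 : {set {set pt r}} :=
  [set Q : {set pt r} | [exists a : vec r, exists b : vec r, exists c : vec r,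
     exists d : vec r, [&& Q == [set (inr a : pt r); inr b; inr c; inr d],
       uniq [:: a; b; c; d] & a + b + c + d == 0]]].

Definition Qtau : {set {set pt r}} :=
  [set Q : {set pt r} | [exists a : vec r, exists b : vec r, exists c : vec r,
     exists d : vec r, [&& Q == [set (inl a : pt r); inl c; inr b; inr d],
       tau (a + c) == b + d & b + d != 0]]].

Definition SQS : {set {set pt r}} := Q0 :|: Q1 :|: Qtau.

Definition AutSQS : {set {perm pt r}} :=
  [set s : {perm pt r} | [set s @: (B : {set pt r}) | B in SQS] == SQS].

Definition Aut_orbit (x : pt r) : {set pt r} := [set (s : {perm pt r}) x | s in AutSQS].

End SQS.

Definition left_pts (r : nat) : {set pt r} := [set (inl a : pt r) | a : vec r].
Definition right_pts (r : nat) : {set pt r} := [set (inr a : pt r) | a : vec r].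

Definition sigma_fun (r : nat) (a b : vec r) (x : pt r) : pt r :=
  match x with inl c => inl (c + a) | inr c => inr (c + b) end.

Lemma sigma_fun_inj (r : nat) (a b : vec r) : injective (sigma_fun a b).
Proof.
case=> [x|x] [y|y] //= [] /addIr -> //.
Qed.

Definition sigma (r : nat) (a b : vec r) : {perm pt r} := perm (@sigma_fun_inj r a b).

(* Main.v *)
Require Import Defs.
From HB Require Import structures.
From mathcomp Require Import all_boot all_algebra all_fingroup.
Import GRing.Theory.
Local Open Scope ring_scope.

Lemma addvv r (x : vec r) : x + x = 0.
Proof. apply/rowP => i; rewrite !mxE; move: (x 0 i) => z.
by case: z => -[|[|//]] Hz; apply/val_inj. Qed.

Lemma addpair r (a b x : vec r) : (a + x) + (b + x) = a + b.
Proof. by rewrite addrACA addvv addr0. Qed.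

Section A.
Variable r : nat.
Variable tau : {perm vec r}.

Lemma autP (s : {perm pt r}) :
  reflect (forall B, B \in SQS tau -> s @: B \in SQS tau) (s \in AutSQS tau).
Proof.
rewrite inE; apply: (iffP idP).
  by move=> /eqP E B HB; rewrite -E; apply: imset_f.
move=> H; rewrite eqEcard card_imset; last exact/imset_inj/perm_inj.
rewrite leqnn andbT; apply/subsetP => C /imsetP [B HB ->]; exact: H.
Qed.

Lemma imsetM (s t : {perm pt r}) (B : {set pt r}) : (s * t)%g @: B = t @: (s @: B).
Proof. by rewrite -imset_comp; apply: eq_imset => x; rewrite permM. Qed.

Lemma autM s t : s \in AutSQS tau -> t \in AutSQS tau -> (s * t)%g \in AutSQS tau.
Proof. by move=> /autP Hs /autP Ht; apply/autP => B HB; rewrite imsetM; auto. Qed.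

Lemma autV s : s \in AutSQS tau -> (s^-1)%g \in AutSQS tau.
Proof.
move=> Hs; apply/autP => B HB; move: Hs; rewrite inE => /eqP E.
move: HB; rewrite -{1}E => /imsetP [C HC ->].
rewrite -imsetM mulgV (_ : (1%g : {perm pt r}) @: C = C) //.
by rewrite -[RHS]imset_id; apply: eq_imset => x; rewrite perm1.
Qed.

Lemma sigma_l (a b c : vec r) : sigma a b (inl c) = inl (c + a).
Proof. by rewrite permE. Qed.
Lemma sigma_r (a b c : vec r) : sigma a b (inr c) = inr (c + b).
Proof. by rewrite permE. Qed.

Lemma uniq4 (p q u v x : vec r) : uniq [:: p; q; u; v] -> uniq [:: p + x; q + x; u + x; v + x].
Proof.
move=> H.
have -> : [:: p + x; q + x; u + x; v + x] = map (fun z => z + x) [:: p; q; u; v] by [].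
by rewrite (map_inj_uniq (addIr x)).
Qed.

Lemma sum4 (p q u v x : vec r) : p + x + (q + x) + (u + x) + (v + x) = p + q + u + v.
Proof. by rewrite -addrA !addpair addrA. Qed.

Lemma sigma_aut a b : sigma a b \in AutSQS tau.
Proof.
apply/autP => B; rewrite /SQS !in_setU => /orP [/orP [] | ].
- rewrite in_set => /existsP [p /existsP [q /existsP [u /existsP [v /and3P [/eqP -> Hu Hs]]]]].
  apply/orP; left; apply/orP; left.
  rewrite in_set.
  apply/existsP; exists (p + a); apply/existsP; exists (q + a);
  apply/existsP; exists (u + a); apply/existsP; exists (v + a).
  apply/and3P; split; last by rewrite sum4.
    by apply/eqP; rewrite ?imsetU1 ?imsetU !imset_set1 !sigma_l.
  exact: uniq4.
- rewrite in_set => /existsP [p /existsP [q /existsP [u /existsP [v /and3P [/eqP -> Hu Hs]]]]].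
  apply/orP; left; apply/orP; right.
  rewrite in_set.
  apply/existsP; exists (p + b); apply/existsP; exists (q + b);
  apply/existsP; exists (u + b); apply/existsP; exists (v + b).
  apply/and3P; split; last by rewrite sum4.
    by apply/eqP; rewrite ?imsetU1 ?imsetU !imset_set1 !sigma_r.
  exact: uniq4.
- rewrite in_set => /existsP [p /existsP [q /existsP [u /existsP [v /and3P [/eqP -> Hu Hs]]]]].
  apply/orP; right.
  rewrite in_set.
  apply/existsP; exists (p + a); apply/existsP; exists (q + b);
  apply/existsP; exists (u + a); apply/existsP; exists (v + b).
  apply/and3P; split; rewrite ?addpair //.
  by apply/eqP; rewrite ?imsetU1 ?imsetU !imset_set1 !sigma_l !sigma_r.
Qed.

Lemma orbit_mem x s : s \in AutSQS tau -> s x \in Aut_orbit tau x.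
Proof. by move=> Hs; apply/imsetP; exists s. Qed.

Lemma orbit_trans x y z : y \in Aut_orbit tau x -> z \in Aut_orbit tau y -> z \in Aut_orbit tau x.
Proof.
move=> /imsetP [s Hs ->] /imsetP [t Ht ->]; apply/imsetP; exists (s * t)%g.
  exact: autM.
by rewrite permM.
Qed.

Lemma orbit_sym x y : y \in Aut_orbit tau x -> x \in Aut_orbit tau y.
Proof.
move=> /imsetP [s Hs ->]; apply/imsetP; exists (s^-1)%g; first exact: autV.
by rewrite permK.
Qed.

Lemma orbit_l (a c : vec r) : (inl c : pt r) \in Aut_orbit tau (inl a).
Proof. apply/imsetP; exists (sigma (c - a) 0); first exact: sigma_aut.
by rewrite sigma_l addrC subrK. Qed.

Lemma orbit_r (a c : vec r) : (inr c : pt r) \in Aut_orbit tau (inr a).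
Proof. apply/imsetP; exists (sigma 0 (c - a)); first exact: sigma_aut.
by rewrite sigma_r addrC subrK. Qed.

End A.

Theorem proposition5 (r : nat) (tau : {perm vec r}) :
  (0 < r)%N -> tau 0 = 0 ->
  (forall a b : vec r, sigma a b \in AutSQS tau) /\
  ((forall x y : pt r, y \in Aut_orbit tau x) \/
   [set Aut_orbit tau x | x : pt r] = [set left_pts r; right_pts r]).
Proof.
move=> _ _; split; first exact: sigma_aut.
case: (boolP [exists s : {perm pt r}, [exists u : vec r, [exists v : vec r,
   (s \in AutSQS tau) && (s (inl u) == inr v)]]]).
- move=> /existsP [s /existsP [u /existsP [v /andP [Hs /eqP E]]]].
  left.
  have LR : forall a c : vec r, (inr c : pt r) \in Aut_orbit tau (inl a).
    move=> a c; apply: (@orbit_trans r tau (inl a) (inl u)); first exact: orbit_l.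
    apply: (@orbit_trans r tau _ (inr v)); last exact: orbit_r.
    by rewrite -E; apply: orbit_mem.
  case=> [a|a] [c|c].
  + exact: orbit_l.
  + exact: LR.
  + exact/orbit_sym/LR.
  + exact: orbit_r.
- move=> Hn.
  have H : forall s a c, s \in AutSQS tau -> s (inl a) != inr c.
    move=> s a c Hs; apply/negP => Hc; move/negP: Hn; apply.
    by apply/existsP; exists s; apply/existsP; exists a; apply/existsP; exists c; rewrite Hs Hc.
  have HL : forall a, Aut_orbit tau (inl a) = left_pts r.
    move=> a; apply/setP => y; apply/idP/idP.
      move=> /imsetP [s Hs ->]; case E: (s (inl a)) => [c|c].
        by apply/imsetP; exists c.
      by move: (H s a c Hs); rewrite E eqxx.
    by move=> /imsetP [c _ ->]; exact: orbit_l.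
  have HR : forall a, Aut_orbit tau (inr a) = right_pts r.
    move=> a; apply/setP => y; apply/idP/idP.
      move=> /imsetP [s Hs ->]; case E: (s (inr a)) => [c|c]; last first.
        by apply/imsetP; exists c.
      have := H (s^-1)%g c a (autV _ _ _ Hs); by rewrite -E permK eqxx.
    by move=> /imsetP [c _ ->]; exact: orbit_r.
  right; apply/setP => X; apply/idP/idP.
    by move=> /imsetP [[a|a] _ ->]; rewrite in_set2 ?HL ?HR eqxx ?orbT.
  rewrite in_set2 => /orP [/eqP -> | /eqP ->]; apply/imsetP.
    by exists (inl 0 : pt r) => //; rewrite HL.
  by exists (inr 0 : pt r) => //; rewrite HR.
Qed.
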